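(* Let $n\ge1$ and let $(f_3,\pi_1,\pi_2)$ be a triple where $f_3$ is a pairing of $[n]\cup[\hat n]$, $\pi_1$ is a set partition of $[n]\cup[\hat n]$ stable by $f_1$ and $f_3$, and $\pi_2$ is a set partition of $[n]\cup[\hat n]$ stable by $f_2$ and $f_3$, all blocks of both having even size. Then every block of $\pi_1$ and every block of $\pi_2$ contains as many hat numbers as non-hat numbers.
   Context: The ground set is $[n]\cup[\hat n]=\{1,\dots,n,\hat1,\dots,\hat n\}$; elements $1,\dots,n$ are non-hat numbers and $\hat1,\dots,\hat n$ are hat numbers. A pairing is a fixed-point-free involution. $f_1=(1\,\hat n)(2\,\hat1)(3\,\hat2)\cdots(n\,\widehat{n-1})$ and $f_2=(1\,\hat1)(2\,\hat2)\cdots(n\,\hat n)$. A set partition is stable by a permutation $f$ if $f$ maps each block onto itself. *)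

(* Defs.v *)
From mathcomp Require Import all_boot.
Set Implicit Arguments. Unset Strict Implicit. Unset Printing Implicit Defensive.

(* Ground set [n] ∪ [n^]: inl i is the non-hat number i+1, inr i is the hat
   number (i+1)^, for i : 'I_n. *)
Definition ground (n : nat) : finType := ('I_n + 'I_n)%type.

Definition is_hat n (x : ground n) : bool := if x is inr _ then true else false.

Definition pairing n (f : ground n -> ground n) : Prop :=
  (forall x, f (f x) = x) /\ (forall x, f x != x).

(* f1 = (1 n^)(2 1^)(3 2^)...(n (n-1)^): non-hat k <-> hat (k-1), 1 <-> n^ *)
Definition f1 n (x : ground n) : ground n :=
  match x with
  | inl i => inr (ord_pred i)
  | inr j => inl (ordS j)
  end.

Definition f2 n (x : ground n) : ground n :=
  match x with
  | inl i => inr i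
  | inr j => inl j
  end.

Definition set_partition n (P : {set {set ground n}}) : Prop :=
  partition P [set: ground n].

Definition stable_by n (P : {set {set ground n}}) (f : ground n -> ground n) : Prop :=
  forall B, B \in P -> f @: B = B.

Definition even_blocks n (P : {set {set ground n}}) : Prop :=
  forall B, B \in P -> ~~ odd #|B|.

Definition balanced_blocks n (P : {set {set ground n}}) : Prop :=
  forall B, B \in P ->
    #|[set x in B | is_hat x]| = #|[set x in B | ~~ is_hat x]|.

(* Main.v *)
Require Import Defs.
From mathcomp Require Import all_boot.

Lemma bal_gen n (f : ground n -> ground n) (B : {set ground n}) :
  involutive f -> (forall x, is_hat (f x) = ~~ is_hat x) -> f @: B = B ->
  #|[set x in B | is_hat x]| = #|[set x in B | ~~ is_hat x]|.
Proof.
move=> fK fh fB.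
have finj : injective f := inv_inj fK.
have sub : forall b, f @: [set x in B | is_hat x == b] \subset [set x in B | is_hat x == ~~ b].
  move=> b; apply/subsetP=> y /imsetP [x]; rewrite inE => /andP [xB /eqP hx] ->.
  rewrite inE fh hx eqxx andbT -fB; exact: imset_f.
have e : forall b, #|[set x in B | is_hat x == b]| <= #|[set x in B | is_hat x == ~~ b]|.
  move=> b; rewrite -(card_imset _ finj); exact: subset_leq_card.
have E1 : [set x in B | is_hat x] = [set x in B | is_hat x == true].
  by apply/setP=> x; rewrite !inE eqb_id.
have E2 : [set x in B | ~~ is_hat x] = [set x in B | is_hat x == false].
  by apply/setP=> x; rewrite !inE eqbF_neg.
rewrite E1 E2; apply/eqP; rewrite eqn_leq; apply/andP; split.
- exact: (e true).
- exact: (e false).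
Qed.

Theorem lemma1 (n : nat) (f3 : ground n -> ground n)
  (pi1 pi2 : {set {set ground n}}) :
  0 < n ->
  pairing f3 ->
  set_partition pi1 -> stable_by pi1 (@f1 n) -> stable_by pi1 f3 ->
  set_partition pi2 -> stable_by pi2 (@f2 n) -> stable_by pi2 f3 ->
  even_blocks pi1 -> even_blocks pi2 ->
  balanced_blocks pi1 /\ balanced_blocks pi2.
Proof.
move=> _ _ _ s1 _ _ s2 _ _ _; split=> B HB.
- apply: bal_gen (s1 B HB) => [[i|j]|[i|j]] //=; by rewrite ?ord_predK ?ordSK.
- by apply: bal_gen (s2 B HB) => [[i|j]|[i|j]].
Qed.
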